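(* Let $X,Y\subset\mathbb{C}$ (with the Euclidean metric) and let $f:X\to Y$ be a homeomorphism, where $X$ is of bounded turning. Then $f$ is quasisymmetric if and only if there is a constant $C$ such that for every $x\in X$ and every $r>0$ the set $f(B(x,r))$ is $C$-roundish at $f(x)$.
   Context: $B(x,r)=\{y\in X:|y-x|\le r\}$ is the closed ball in $X$. $X$ is of bounded turning if there is $L>0$ such that any $z_1,z_2\in X$ are joined by a curve $[z_1,z_2]\subset X$ with $\operatorname{diam}[z_1,z_2]\le L|z_1-z_2|$. For $S\subset Y$ and $y\in S$, the inradius is $\operatorname{inr}(S,y)=\inf\{|y-w|:w\in Y\setminus S\}$; $S$ is $C$-roundish at $y$ if $\operatorname{diam}S\le C\operatorname{inr}(S,y)$. A homeomorphism $f$ is quasisymmetric if there is a homeomorphism $\eta:[0,\infty)\to[0,\infty)$ such that for all $t>0$ and $a,b,x\in X$, $|x-a|\le t|x-b|$ implies $|f(x)-f(a)|\le\eta(t)|f(x)-f(b)|$. *)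

(* Defs.v *)
From mathcomp Require Import all_boot all_order all_algebra.
From mathcomp Require Import all_classical all_reals all_analysis.
From mathcomp Require Export complex.
Import Order.TTheory GRing.Theory Num.Theory.

Set Implicit Arguments.
Unset Strict Implicit.
Unset Printing Implicit Defensive.

Local Open Scope classical_set_scope.
Local Open Scope ring_scope.

Section Defs.
Variable R : realType.

Definition cdist (z w : R[i]) : R :=
  Num.sqrt (complex.Re (z - w) ^+ 2 + complex.Im (z - w) ^+ 2).

Definition rdist (a b : R) : R := `|a - b|.

(* f is a homeomorphism from S onto T (metric spaces with distances dA, dB):
   f maps S into T, is a bijection S -> T, is continuous on S, and its
   inverse is continuous on T (stated at the point f x, using that every
   point of T is of the form f x'). *)
Definition homeo_between {A B : Type} (dA : A -> A -> R) (dB : B -> B -> R)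
  (S : set A) (T : set B) (f : A -> B) : Prop :=
  [/\ (forall x, S x -> T (f x)),
      (forall x y, S x -> S y -> f x = f y -> x = y),
      (forall y, T y -> exists2 x, S x & f x = y),
      (forall x, S x -> forall e, 0 < e -> exists2 d, 0 < d &
          forall x', S x' -> dA x' x < d -> dB (f x') (f x) < e) &
      (forall x, S x -> forall e, 0 < e -> exists2 d, 0 < d &
          forall x', S x' -> dB (f x') (f x) < d -> dA x' x < e)].

Definition diam (S : set R[i]) : \bar R :=
  ereal_sup [set e | exists a b, [/\ S a, S b & e = (cdist a b)%:E]].

(* inradius inr(S,y) = inf { |y - w| : w in Y \ S } (= +oo if Y \ S empty) *)
Definition inr (Y S : set R[i]) (y : R[i]) : \bar R :=
  ereal_inf [set e | exists2 w, (Y `\` S) w & e = (cdist y w)%:E].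

Definition roundish (Y : set R[i]) (C : R) (S : set R[i]) (y : R[i]) : Prop :=
  (diam S <= C%:E * inr Y S y)%E.

Definition cball (X : set R[i]) (x : R[i]) (r : R) : set R[i] :=
  [set y | X y /\ cdist y x <= r].

Definition curve_in (X : set R[i]) (z1 z2 : R[i]) (gamma : R -> R[i]) : Prop :=
  [/\ gamma 0 = z1, gamma 1 = z2,
      (forall t, 0 <= t <= 1 -> X (gamma t)) &
      (forall t, 0 <= t <= 1 -> forall e, 0 < e -> exists2 d, 0 < d &
         forall s, 0 <= s <= 1 -> `|s - t| < d -> cdist (gamma s) (gamma t) < e)].

Definition bounded_turning (X : set R[i]) : Prop :=
  exists2 L : R, 0 < L & forall z1 z2, X z1 -> X z2 ->
    exists gamma, curve_in X z1 z2 gamma /\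
      Order.le (diam (gamma @` [set t | 0 <= t <= 1])) ((L * cdist z1 z2)%:E).

Definition quasisymmetric (X : set R[i]) (f : R[i] -> R[i]) : Prop :=
  exists eta : R -> R,
    homeo_between rdist rdist [set t | 0 <= t] [set t | 0 <= t] eta /\
    forall t, 0 < t -> forall a b x, X a -> X b -> X x ->
      cdist x a <= t * cdist x b -> cdist (f x) (f a) <= eta t * cdist (f x) (f b).

End Defs.

(* Main.v *)
Require Import Defs.
From mathcomp Require Import all_boot all_order all_algebra.
From mathcomp Require Import all_classical all_reals all_analysis.
From mathcomp Require Import complex.
From mathcomp Require Import ring lra.
Import Order.TTheory GRing.Theory Num.Theory.
Import numFieldNormedType.Exports.
Local Open Scope classical_set_scope.
Local Open Scope ring_scope.
Section Basic.
Variable R : realType.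
Implicit Types x y z : R[i].

Lemma cdistE x y : (cdist x y)%:C%C = `|x - y|.
Proof. by rewrite normc_def. Qed.

Lemma cdist_ge0 x y : 0 <= cdist x y.
Proof. exact: sqrtr_ge0. Qed.

Lemma cdistC x y : cdist x y = cdist y x.
Proof. by apply: complexI; rewrite !cdistE distrC. Qed.

Lemma cdist_tri x y z : cdist x z <= cdist x y + cdist y z.
Proof.
rewrite -lecR rmorphD /= !cdistE.
by rewrite (_ : x - z = (x - y) + (y - z)) ?ler_normD // addrA subrK.
Qed.

Lemma cdistxx x : cdist x x = 0.
Proof. by apply: complexI; rewrite cdistE subrr normr0. Qed.

Lemma cdist_eq0 x y : cdist x y = 0 -> x = y.
Proof.
move=> h; apply/eqP; rewrite -subr_eq0 -normr_eq0 -cdistE h.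
by [].
Qed.

Lemma cdist_gt0 x y : x <> y -> 0 < cdist x y.
Proof.
move=> nxy; rewrite lt_neqAle cdist_ge0 andbT eq_sym; apply/eqP => /cdist_eq0.
exact: nxy.
Qed.

Lemma cdist_Re x y : `|complex.Re x - complex.Re y| <= cdist x y.
Proof.
rewrite /cdist -(sqrtr_sqr (_ - _)) ler_sqrt ?addr_ge0 ?sqr_ge0 //.
by rewrite -raddfB /= lerDl sqr_ge0.
Qed.

Lemma cdist_Im x y : `|complex.Im x - complex.Im y| <= cdist x y.
Proof.
rewrite /cdist -(sqrtr_sqr (_ - _)) ler_sqrt ?addr_ge0 ?sqr_ge0 //.
by rewrite -raddfB /= lerDr sqr_ge0.
Qed.

Lemma cdist_small x y d : 0 < d ->
  `|complex.Re x - complex.Re y| < d / 2 ->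
  `|complex.Im x - complex.Im y| < d / 2 -> cdist x y < d.
Proof.
move=> d0 h1 h2.
rewrite /cdist -(ger0_norm (ltW d0)) -sqrtr_sqr ltr_sqrt ?exprn_gt0 //.
rewrite !raddfB /=.
have a1 : (complex.Re x - complex.Re y) ^+ 2 < (d / 2) ^+ 2.
  by rewrite -real_normK ?num_real // ltr_pXn2r // ?nnegrE // ?divr_ge0 // ltW.
have a2 : (complex.Im x - complex.Im y) ^+ 2 < (d / 2) ^+ 2.
  by rewrite -real_normK ?num_real // ltr_pXn2r // ?nnegrE // ?divr_ge0 // ltW.
apply: (lt_le_trans (ltrD a1 a2)).
rewrite -subr_ge0.
have -> : d ^+ 2 - ((d / 2) ^+ 2 + (d / 2) ^+ 2) = d ^+ 2 / 2 by field.
by rewrite divr_ge0 // sqr_ge0.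
Qed.

Lemma truncn_close (a b : R) : 0 <= a -> 0 <= b ->
  Num.truncn a = Num.truncn b -> `|a - b| < 1.
Proof.
move=> a0 b0 e.
have /andP[h1 h2] := truncn_itv a0.
have /andP[h3 h4] := truncn_itv b0.
rewrite e in h1 h2.
move: h1 h2 h3 h4; set k := ((Num.truncn b)%:R : R).
rewrite -natr1 -/k => h1 h2 h3 h4.
rewrite ltr_norml; apply/andP; split; lra.
Qed.

Lemma packing (c : R[i]) (rad dl : R) (n : nat) (p : nat -> R[i]) :
  0 < dl -> (forall i, (i < n)%N -> cdist (p i) c <= rad) ->
  (forall i j, (i < n)%N -> (j < n)%N -> i <> j -> dl <= cdist (p i) (p j)) ->
  (n <= (Num.truncn (4 * rad / dl)).+1 ^ 2)%N.
Proof.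
move=> dl0 hin hsep.
set k := Num.truncn (4 * rad / dl).
pose s := dl / 2.
have s0 : 0 < s by rewrite divr_gt0.
pose fx (i : nat) := (complex.Re (p i) - complex.Re c + rad) / s.
pose fy (i : nat) := (complex.Im (p i) - complex.Im c + rad) / s.
have fxb i : (i < n)%N -> 0 <= fx i /\ (Num.truncn (fx i) <= k)%N.
  move=> hi; have := hin i hi; have := cdist_Re (p i) c.
  rewrite ler_norml => /andP[a1 a2] a3.
  split; first by rewrite divr_ge0 ?(ltW s0) //; lra.
  apply: le_truncn; rewrite /fx /s.
  rewrite ler_pdivrMr ?divr_gt0 //.
  have -> : 4 * rad / dl * (dl / 2) = 2 * rad.
    by field; rewrite gt_eqF.
  lra.
have fyb i : (i < n)%N -> 0 <= fy i /\ (Num.truncn (fy i) <= k)%N.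
  move=> hi; have := hin i hi; have := cdist_Im (p i) c.
  rewrite ler_norml => /andP[a1 a2] a3.
  split; first by rewrite divr_ge0 ?(ltW s0) //; lra.
  apply: le_truncn; rewrite /fy /s.
  rewrite ler_pdivrMr ?divr_gt0 //.
  have -> : 4 * rad / dl * (dl / 2) = 2 * rad.
    by field; rewrite gt_eqF.
  lra.
pose F (i : 'I_n) : 'I_k.+1 * 'I_k.+1 :=
  (inord (Num.truncn (fx i)), inord (Num.truncn (fy i))).
have Finj : injective F.
  move=> i j [/(congr1 val) ex /(congr1 val) ey].
  have hi := ltn_ord i; have hj := ltn_ord j.
  have [x1 x2] := fxb i hi; have [x3 x4] := fxb j hj.
  have [y1 y2] := fyb i hi; have [y3 y4] := fyb j hj.
  move: ex ey; rewrite /= !inordK ?ltnS // => ex ey.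
  apply: val_inj; case: (eqVneq (val i) (val j)) => [//|/eqP nij].
  exfalso; move: (hsep _ _ hi hj nij); rewrite leNgt => /negP; apply.
  apply: cdist_small => //.
  - have := truncn_close _ _ x1 x3 ex.
    have -> : fx i - fx j = (complex.Re (p i) - complex.Re (p j)) / s.
      by rewrite /fx; field; rewrite gt_eqF.
    rewrite normrM (gtr0_norm (x:=s^-1)) ?invr_gt0 // ltr_pdivrMr // mul1r //.
  - have := truncn_close _ _ y1 y3 ey.
    have -> : fy i - fy j = (complex.Im (p i) - complex.Im (p j)) / s.
      by rewrite /fy; field; rewrite gt_eqF.
    rewrite normrM (gtr0_norm (x:=s^-1)) ?invr_gt0 // ltr_pdivrMr // mul1r //.
have := leq_card F Finj.
by rewrite card_prod !card_ord -mulnn.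
Qed.
Lemma ivt01 (g : R -> R) v :
 (forall t, 0 <= t <= 1 -> forall e, 0 < e -> exists2 d, 0 < d &
    forall s, 0 <= s <= 1 -> `|s - t| < d -> `|g s - g t| < e) ->
 g 0 <= v <= g 1 -> exists t, 0 <= t <= 1 /\ g t = v.
Proof.
move=> gc /andP[g0 g1].
pose S := [set t : R | 0 <= t <= 1 /\ g t <= v].
have S0 : S 0 by split; rewrite ?lexx ?ler01.
have Sub : ubound S 1 by move=> t [/andP[]].
have hs : has_sup S by split; [exists 0 | exists 1].
pose c := sup S.
have c0 : 0 <= c by apply: sup_upper_bound.
have c1 : c <= 1 by apply: ge_sup => //; exists 0.
have cI : 0 <= c <= 1 by rewrite c0 c1.
exists c; split => //.
have [lt|gt|//] := ltgtP (g c) v.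
- have vc : 0 < v - g c by rewrite subr_gt0.
  have [d d0 hd] := gc c cI _ vc.
  have cn1 : c < 1.
    rewrite lt_neqAle c1 andbT; apply/eqP => e1.
    by move: lt; rewrite e1 => /lt_le_trans /(_ g1); rewrite ltxx.
  pose s := Num.min (c + d / 2) 1.
  have sI : 0 <= s <= 1.
    rewrite ge_min lexx orbT andbT le_min ler01 andbT.
    by rewrite addr_ge0 // divr_ge0 // ltW.
  have cs : c < s.
    by rewrite lt_min cn1 andbT ltrDl divr_gt0.
  have : S s.
    split => //.
    have := hd s sI.
    have : `|s - c| < d.
      have : s <= c + d / 2 by rewrite /s ge_min lexx.
      rewrite gtr0_norm ?subr_gt0 //; lra.
    move=> h1 /(_ h1) h2.
    move: h2; rewrite ltr_norml; lra.
  move/(sup_upper_bound hs); rewrite -/c => sc.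
  by move: (lt_le_trans cs sc); rewrite ltxx.
- have vc : 0 < g c - v by rewrite subr_gt0.
  have [d d0 hd] := gc c cI _ vc.
  have cn0 : 0 < c.
    rewrite lt_neqAle c0 andbT; apply/eqP => e0.
    by move: gt; rewrite -e0; lra.
  pose s := Num.max (c - d / 2) 0.
  have sc : s < c by rewrite gt_max cn0 andbT; lra.
  have : c <= s.
    apply: ge_sup; first by exists 0.
    move=> t [/andP[t0 t1] gtv]; rewrite leNgt; apply/negP => st.
    have tc : t <= c by apply: (sup_upper_bound hs); split => //; rewrite t0 t1.
    have : `|t - c| < d.
      have : c - d / 2 <= s by rewrite /s le_max lexx.
      rewrite ler0_norm ?subr_le0 //; lra.
    move/(hd t); rewrite ?t0 ?t1 => /(_ isT); rewrite ltr_norml; lra.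
  by rewrite leNgt sc.
Qed.

Lemma cdist_rev c y z : `|cdist c y - cdist c z| <= cdist y z.
Proof.
rewrite ler_norml; apply/andP; split.
- have := cdist_tri c y z; lra.
- have := cdist_tri c z y; rewrite (cdistC z y); lra.
Qed.

Definition contX (X : set R[i]) (h : R[i] -> R[i]) := forall x, X x ->
  forall e, 0 < e -> exists2 d, 0 < d &
    forall x', X x' -> cdist x' x < d -> cdist (h x') (h x) < e.

Lemma contX_id X : contX X id.
Proof. by move=> x _ e e0; exists e. Qed.

Lemma curve_ivt X z1 z2 (g : R -> R[i]) (h : R[i] -> R[i]) c v :
  curve_in X z1 z2 g -> contX X h ->
  cdist (h c) (h z1) <= v <= cdist (h c) (h z2) ->
  exists t, 0 <= t <= 1 /\ cdist (h c) (h (g t)) = v.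
Proof.
case=> g0 g1 gX gc hc hv.
apply: (ivt01 (fun t => cdist (h c) (h (g t)))); last by rewrite g0 g1.
move=> t tI e e0.
have [d1 d10 hd1] := hc _ (gX t tI) e e0.
have [d2 d20 hd2] := gc t tI d1 d10.
exists d2 => // s sI st.
apply: le_lt_trans (cdist_rev _ _ _) _.
exact: hd1 (gX s sI) (hd2 s sI st).
Qed.

Lemma curve_diam X z1 z2 (g : R -> R[i]) (M t : R) :
  curve_in X z1 z2 g ->
  Order.le (diam (g @` [set t | 0 <= t <= 1])) (M%:E) ->
  0 <= t <= 1 -> cdist (g t) z1 <= M.
Proof.
case=> g0 _ _ _ hd tI.
rewrite -lee_fin; apply: le_trans hd.
apply: ereal_sup_ubound; exists (g t), (g 0); split.
- by exists t.
- by exists 0 => //; rewrite /= lexx ler01.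
- by rewrite -g0.
Qed.

Definition injX (X : set R[i]) (f : R[i] -> R[i]) :=
  forall x y, X x -> X y -> f x = f y -> x = y.

Definition WQS (X : set R[i]) (f : R[i] -> R[i]) (H : R) :=
  forall x a b, X x -> X a -> X b -> cdist x a < cdist x b ->
    cdist (f x) (f a) <= H * cdist (f x) (f b).

Lemma wqs_of_roundish X Y f C : (forall x, X x -> Y (f x)) -> injX X f ->
  (forall x r, X x -> 0 < r -> roundish Y C (f @` cball X x r) (f x)) ->
  WQS X f (Num.max C 1).
Proof.
move=> fXY finj hr x a b Xx Xa Xb lt.
set H := Num.max C 1.
have H0 : 0 <= H by rewrite le_max ler01 orbT.
have CH : C <= H by rewrite le_max lexx.
case: (eqVneq a x) => [-> | nax].
  by rewrite cdistxx mulr_ge0 // cdist_ge0.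
have r0 : 0 < cdist x a by apply: cdist_gt0 => e; move: nax; rewrite e eqxx.
have := hr x _ Xx r0; rewrite /roundish.
set S := f @` cball X x (cdist x a).
have SX : S (f x) by exists x => //; split => //; rewrite cdistxx ltW.
have Sa : S (f a) by exists a => //; split => //; rewrite cdistC.
have nSb : ~ S (f b).
  case=> y [Xy hy] efy; have eyb := finj _ _ Xy Xb efy; subst y.
  by move: (le_lt_trans hy lt); rewrite cdistC ltxx.
have d1 : ((cdist (f x) (f a))%:E <= diam S)%E.
  by apply: ereal_sup_ubound; exists (f x), (f a).
have i1 : (inr Y S (f x) <= (cdist (f x) (f b))%:E)%E.
  by apply: ereal_inf_lbound; exists (f b) => //; split => //; apply: fXY.
have i0 : (0 <= inr Y S (f x))%E.
  by apply: le_ereal_inf_tmp => e [w _ ->]; rewrite lee_fin cdist_ge0.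
move: i0 i1; case: (inr Y S (f x)) => [i| |] //; rewrite !lee_fin => i0 i1.
move=> hd; have := le_trans d1 hd; rewrite -EFinM lee_fin => h.
apply: (le_trans h); apply: (@le_trans _ _ (H * i)).
  by rewrite ler_wpM2r.
by rewrite ler_wpM2l.
Qed.

Arguments cdist_eq0 {x y}.
Arguments curve_diam {X z1 z2 g M t}.
Arguments packing c {rad dl n p}.
Arguments curve_ivt {X z1 z2 g h c v}.

Definition BTL (X : set R[i]) (L : R) := forall z1 z2, X z1 -> X z2 ->
  exists gamma, curve_in X z1 z2 gamma /\
    Order.le (diam (gamma @` [set t | 0 <= t <= 1])) ((L * cdist z1 z2)%:E).

Lemma ratio2 X f H L : 0 <= H -> injX X f -> contX X f -> WQS X f H ->
  0 < L -> BTL X L ->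
  exists2 K, 1 <= K & forall x a b, X x -> X a -> X b ->
    cdist x a <= 2 * cdist x b -> cdist (f x) (f a) <= K * cdist (f x) (f b).
Proof.
move=> H0 finj fc fw L0 bt.
set N := ((Num.truncn (8 * L)).+1 ^ 2)%N.
set n := N.+1.
set lam := H + 2.
have lam1 : 1 <= lam by rewrite /lam; lra.
exists (lam ^+ n.+1); first exact: exprn_ege1.
move=> x a b Xx Xa Xb hab.
case: (eqVneq x b) => [exb | nxb].
  subst b; rewrite cdistxx mulr0 in hab.
  have e : cdist x a = 0 by apply/le_anti; rewrite hab cdist_ge0.
  by rewrite -(cdist_eq0 e) cdistxx mulr0.
have r0 : 0 < cdist x b by apply: cdist_gt0; apply/eqP.
set rho := cdist x b in r0 hab.
have s0 : 0 < cdist (f x) (f b).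
  by apply: cdist_gt0 => /(finj _ _ Xx Xb) exb; move: nxb; rewrite exb eqxx.
set sig := cdist (f x) (f b) in s0 *.
rewrite leNgt; apply/negP => hK.
have [g [gc gd]] := bt x a Xx Xa.
have pts : forall j, exists t, (0 < j <= n)%N ->
    0 <= t <= 1 /\ cdist (f x) (f (g t)) = lam ^+ j * sig.
  move=> j; case: (boolP (0 < j <= n)%N) => hj; last by exists 0.
  have [|t ht] := curve_ivt (h := f) (c := x) (v := lam ^+ j * sig) gc fc.
    rewrite cdistxx mulr_ge0 ?exprn_ge0 ?(ltW s0) /= ?(le_trans _ lam1) //.
    apply: ltW; apply: le_lt_trans hK; rewrite ler_wpM2r ?(ltW s0) //.
    by apply: ler_weXn2l => //; case/andP: hj => _ /leqW.
  by exists t.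
have [T hT] := boolp.choice pts.
pose p i := g (T i.+1).
have hTi i : (i < n)%N -> 0 <= T i.+1 <= 1 /\
    cdist (f x) (f (p i)) = lam ^+ i.+1 * sig by move=> hi; apply: hT.
have Xp i : (i < n)%N -> X (p i).
  by move=> hi; case: gc => _ _ gX _; apply: gX; case: (hTi i hi).
have pin i : (i < n)%N -> cdist (p i) x <= 2 * L * rho.
  move=> hi; apply: le_trans (curve_diam gc gd (proj1 (hTi i hi))) _.
  by rewrite -mulrA mulrCA ler_wpM2l ?(ltW L0) // mulrC.
have far i : (i < n)%N -> rho <= cdist (p i) x.
  move=> hi; rewrite leNgt; apply/negP => h.
  have := fw x (p i) b Xx (Xp i hi) Xb; rewrite cdistC => /(_ h).
  rewrite (proj2 (hTi i hi)) -/sig => h2.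
  have : lam <= lam ^+ i.+1 by apply: ler_eXnr.
  move=> h3; have h4 : lam * sig <= H * sig.
    by apply: le_trans h2; rewrite ler_wpM2r ?(ltW s0).
  by move: h4; rewrite ler_pM2r // /lam; lra.
have sep1 i j : (i < j)%N -> (j < n)%N -> rho <= cdist (p i) (p j).
  move=> ij hj; have hi := ltn_trans ij hj.
  apply: le_trans (far i hi) _; rewrite leNgt; apply/negP => h.
  have := fw (p i) (p j) x (Xp i hi) (Xp j hj) Xx h.
  have := cdist_tri (f x) (f (p i)) (f (p j)).
  rewrite (proj2 (hTi i hi)) (proj2 (hTi j hj)) (cdistC (f (p i)) (f x)).
  rewrite (proj2 (hTi i hi)).
  set u := lam ^+ i.+1 * sig.
  have u0 : 0 < u by rewrite mulr_gt0 // exprn_gt0 // (lt_le_trans _ lam1).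
  have : lam * u <= lam ^+ j.+1 * sig.
    rewrite /u mulrA -exprS ler_wpM2r ?(ltW s0) //.
    exact: ler_weXn2l.
  move=> h1 h2 h3.
  have : lam * u <= (1 + H) * u by lra.
  by rewrite ler_pM2r // /lam; lra.
have sep i j : (i < n)%N -> (j < n)%N -> i <> j -> rho <= cdist (p i) (p j).
  move=> hi hj nij; case: (ltngtP i j) => [ij|ji|eij] //.
  - exact: sep1.
  - by rewrite cdistC; apply: sep1.
have := packing x r0 pin sep.
have -> : 4 * (2 * L * rho) / rho = 8 * L by field; rewrite gt_eqF.
by rewrite -/N /n ltnn.
Qed.

Lemma ratio2_iter X f (K L : R) : 1 <= K -> BTL X L ->
  (forall x a b, X x -> X a -> X b ->
    cdist x a <= 2 * cdist x b -> cdist (f x) (f a) <= K * cdist (f x) (f b)) ->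
  forall (m : nat) (x a b : R[i]), X x -> X a -> X b ->
    cdist x a <= 2 ^+ m.+1 * cdist x b ->
    cdist (f x) (f a) <= K ^+ m.+1 * cdist (f x) (f b).
Proof.
move=> K1 bt hK; elim=> [|m IH] x a b Xx Xa Xb.
  by rewrite !expr1; apply: hK.
move=> hab.
have K0 : 0 <= K by apply: le_trans K1.
have sg0 := cdist_ge0 (f x) (f b).
have rh0 := cdist_ge0 x b.
case: (lerP (cdist x a) (2 ^+ m.+1 * cdist x b)) => h1.
  apply: le_trans (IH x a b Xx Xa Xb h1) _.
  by rewrite ler_wpM2r // ler_weXn2l.
have [g [gc _]] := bt x a Xx Xa.
have [|t [tI ht]] := curve_ivt (h := id) (c := x) (v := 2 * cdist x b) gc
    (contX_id X).
  rewrite /= cdistxx mulr_ge0 //=; apply: ltW; apply: le_lt_trans h1.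
  by apply: ler_wpM2r => //; apply: ler_eXnr => //; rewrite ler1n.
move: ht; rewrite /= => ht.
have Xg : X (g t) by case: gc => _ _ gX _; apply: gX.
have h2 : cdist x a <= 2 ^+ m.+1 * cdist x (g t).
  by rewrite ht mulrA -exprSr.
have := IH x a (g t) Xx Xa Xg h2.
have h3 : cdist (f x) (f (g t)) <= K * cdist (f x) (f b).
  by apply: hK => //; rewrite ht.
move=> h4; apply: le_trans h4 _.
by rewrite [K ^+ m.+2]exprSr -mulrA; apply: ler_wpM2l => //; exact: exprn_ge0.
Qed.

Lemma small_ratio X f (H L : R) : 1 <= H -> injX X f -> WQS X f H -> BTL X L ->
  exists2 t0, 0 < t0 & forall x a b, X x -> X a -> X b ->
    cdist x a <= t0 * cdist x b ->
    cdist (f x) (f a) <= 2^-1 * cdist (f x) (f b).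
Proof.
move=> H1 finj fw bt.
have H0 : 0 < H by apply: lt_le_trans H1.
set N := ((Num.truncn (8 * H ^+ 3)).+1 ^ 2)%N.
set n := N.+1.
have t3 : 0 < (3 : R) ^+ n.+1 by rewrite exprn_gt0.
exists ((3 ^+ n.+1)^-1); first by rewrite invr_gt0.
move=> x a b Xx Xa Xb hab.
case: (eqVneq a x) => [-> | nax].
  by rewrite cdistxx mulr_ge0 ?cdist_ge0 // invr_ge0.
have s0 : 0 < cdist x a by apply: cdist_gt0 => e; move: nax; rewrite e eqxx.
set sa := cdist x a in s0 hab *.
have hrho : (3 : R) ^+ n.+1 * sa <= cdist x b.
  by rewrite mulrC -ler_pdivlMr // mulrC.
have r0 : 0 < cdist x b.
  by apply: lt_le_trans hrho; rewrite mulr_gt0.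
set rho := cdist x b in hrho r0 *.
have nxb : x <> b by move=> e; move: r0; rewrite /rho e cdistxx ltxx.
have sg0 : 0 < cdist (f x) (f b).
  by apply: cdist_gt0 => /(finj _ _ Xx Xb).
set sig := cdist (f x) (f b) in sg0 *.
rewrite leNgt; apply/negP => hK.
have [g [gc _]] := bt x b Xx Xb.
have pow_lt i j : (i < j)%N -> (3 : R) ^+ i * sa < 3 ^+ j * sa.
  by move=> ij; rewrite ltr_pM2r // ltr_eXn2l // ltr1n.
have pts : forall j, exists t, (0 < j <= n)%N ->
    0 <= t <= 1 /\ cdist x (g t) = 3 ^+ j * sa.
  move=> j; case: (boolP (0 < j <= n)%N) => hj; last by exists 0.
  have [|t ht] := curve_ivt (h := id) (c := x) (v := 3 ^+ j * sa) gc
     (contX_id X).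
    rewrite /= cdistxx mulr_ge0 ?exprn_ge0 ?(ltW s0) //=.
    apply: le_trans hrho; apply/ltW/pow_lt.
    by case/andP: hj.
  by exists t.
have [T hT] := boolp.choice pts.
pose p i := g (T i.+1).
have hTi i : (i < n)%N -> 0 <= T i.+1 <= 1 /\
    cdist x (p i) = 3 ^+ i.+1 * sa by move=> hi; apply: hT.
have Xp i : (i < n)%N -> X (p i).
  by move=> hi; case: gc => _ _ gX _; apply: gX; case: (hTi i hi).
have up i : (i < n)%N -> cdist (f (p i)) (f x) <= H * sig.
  move=> hi; rewrite cdistC; apply: fw => //; first exact: Xp.
  rewrite (proj2 (hTi i hi)); apply: lt_le_trans hrho; exact: pow_lt.
have lo i : (i < n)%N -> 2^-1 * sig < H * cdist (f x) (f (p i)).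
  move=> hi; apply: lt_le_trans hK _; apply: fw => //; first exact: Xp.
  rewrite (proj2 (hTi i hi)); rewrite -[X in X < _]mul1r -(expr0 (3:R)).
  exact: pow_lt.
have sep1 i j : (i < j)%N -> (j < n)%N ->
    sig / (2 * H ^+ 2) <= cdist (f (p i)) (f (p j)).
  move=> ij hj; have hi := ltn_trans ij hj.
  have h1 : cdist (p i) x < cdist (p i) (p j).
    have := cdist_tri x (p i) (p j).
    rewrite (proj2 (hTi i hi)) (proj2 (hTi j hj)) (cdistC (p i) x).
    rewrite (proj2 (hTi i hi)).
    have : 3 ^+ i.+2 * sa <= 3 ^+ j.+1 * sa.
      by rewrite ler_pM2r // ler_weXn2l // ler1n.
    rewrite exprS -mulrA.
    have : 0 < 3 ^+ i.+1 * sa by rewrite mulr_gt0 // exprn_gt0.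
    lra.
  have h2 := fw (p i) x (p j) (Xp i hi) Xx (Xp j hj) h1.
  have h3 := lo i hi.
  rewrite cdistC in h2.
  have h4 : 2^-1 * sig < H ^+ 2 * cdist (f (p i)) (f (p j)).
    apply: lt_le_trans h3 _.
    by rewrite expr2 -mulrA ler_wpM2l // ltW.
  apply/ltW.
  have -> : sig / (2 * H ^+ 2) = (2^-1 * sig) / H ^+ 2.
    by field; rewrite gt_eqF.
  by rewrite ltr_pdivrMr ?exprn_gt0 // [_ * H ^+ 2]mulrC.
have sep i j : (i < n)%N -> (j < n)%N -> i <> j ->
    sig / (2 * H ^+ 2) <= cdist (f (p i)) (f (p j)).
  move=> hi hj nij; case: (ltngtP i j) => [ij|ji|eij] //.
  - exact: sep1.
  - by rewrite cdistC; apply: sep1.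
have dl0 : 0 < sig / (2 * H ^+ 2) by rewrite divr_gt0 // mulr_gt0 // exprn_gt0.
have := packing (f x) (p := fun i => f (p i)) dl0 up sep.
have -> : 4 * (H * sig) / (sig / (2 * H ^+ 2)) = 8 * H ^+ 3.
  by field; rewrite !gt_eqF.
by rewrite -/N /n ltnn.
Qed.

Lemma small_iter (X : set R[i]) (f : R[i] -> R[i]) (t0 L : R) : 0 < t0 -> t0 <= 1 -> BTL X L ->
  (forall x a b, X x -> X a -> X b ->
    cdist x a <= t0 * cdist x b ->
    cdist (f x) (f a) <= 2^-1 * cdist (f x) (f b)) ->
  forall (m : nat) (x a b : R[i]), X x -> X a -> X b ->
    cdist x a <= t0 ^+ m.+1 * cdist x b ->
    cdist (f x) (f a) <= (2^-1) ^+ m.+1 * cdist (f x) (f b).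
Proof.
move=> t00 t01 bt hK; elim=> [|m IH] x a b Xx Xa Xb.
  by rewrite !expr1; apply: hK.
move=> hab.
have rh0 := cdist_ge0 x b.
have [g [gc _]] := bt x b Xx Xb.
have [|t [tI ht]] := curve_ivt (h := id) (c := x) (v := t0 ^+ m.+1 * cdist x b)
    gc (contX_id X).
  rewrite /= cdistxx mulr_ge0 ?exprn_ge0 ?(ltW t00) //=.
  by rewrite ler_piMl // exprn_ile1 // ltW.
move: ht; rewrite /= => ht.
have Xg : X (g t) by case: gc => _ _ gX _; apply: gX.
have h1 : cdist (f x) (f a) <= 2^-1 * cdist (f x) (f (g t)).
  by apply: hK => //; rewrite ht mulrA -exprS.
have h2 : cdist (f x) (f (g t)) <= (2^-1) ^+ m.+1 * cdist (f x) (f b).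
  by apply: IH => //; rewrite ht.
apply: le_trans h1 _.
by rewrite [(2^-1) ^+ m.+2]exprS -mulrA ler_wpM2l // invr_ge0 ler0n.
Qed.



Lemma cont_eps (h : R -> R) : continuous h -> forall x e : R, 0 < e ->
  exists2 d, 0 < d & forall y : R, `|y - x| < d -> `|h y - h x| < e.
Proof.
move=> hc x e e0.
have := hc x; move/cvgrPdist_lt/(_ e e0) => /nbhs_ballP [d d0 hd].
exists d => // y yx; rewrite distrC; apply: hd.
by rewrite /ball /= distrC.
Qed.

Lemma homeo_incr (e : R -> R) : continuous e -> e 0 = 0 ->
  (forall s t, 0 <= s -> s < t -> e s < e t) ->
  (forall t, 0 <= t -> t <= e t) ->
  homeo_between (@rdist R) (@rdist R) [set t | 0 <= t] [set t | 0 <= t] e.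
Proof.
move=> ec e0 einc ege.
have emon s t : 0 <= s -> s <= t -> e s <= e t.
  move=> s0; rewrite le_eqVlt => /orP[/eqP -> //| st].
  exact/ltW/einc.
have epos t : 0 <= t -> 0 <= e t by move=> t0; rewrite -e0; apply: emon.
split.
- exact: epos.
- move=> x y /= x0 y0 exy; case: (ltgtP x y) => // h.
  + by move: (einc _ _ x0 h); rewrite exy ltxx.
  + by move: (einc _ _ y0 h); rewrite exy ltxx.
- move=> y /= y0; case: (eqVneq y 0) => [-> | yn0].
    by exists 0 => //.
  have yp : 0 < y by rewrite lt_neqAle eq_sym yn0 y0.
  have [||t [tI ht]] := @ivt01 (fun s => e (s * y)) y.
  + move=> t tI eps eps0.
    have [d d0 hd] := @cont_eps e ec (t * y) _ eps0.
    exists (d / y); first by rewrite divr_gt0.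
    move=> s sI st; apply: hd.
    by rewrite -mulrBl normrM (gtr0_norm yp) -ltr_pdivlMr.
  + by rewrite mul0r e0 mul1r y0 ege.
  + exists (t * y) => //=; rewrite mulr_ge0 //; by case/andP: tI.
- move=> x /= x0 eps eps0.
  have [d d0 hd] := @cont_eps e ec x _ eps0.
  by exists d => // y _; apply: hd.
- move=> x /= x0 eps eps0.
  set u := eps / 2.
  have u0 : 0 < u by rewrite divr_gt0.
  have d10 : 0 < e (x + u) - e x.
    by rewrite subr_gt0; apply: einc => //; rewrite ltrDl.
  pose d2 := if u <= x then e x - e (x - u) else e (x + u) - e x.
  have d20 : 0 < d2.
    rewrite /d2; case: ifP => // ux.
    by rewrite subr_gt0; apply: einc; rewrite ?subr_ge0 // ltrBlDr ltrDl.
  exists (Num.min (e (x + u) - e x) d2); first by rewrite lt_min d10 d20.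
  move=> y /= y0; rewrite /rdist lt_min => /andP[h1 h2].
  rewrite ltNge; apply/negP => hxy; exfalso.
  have [yb|ys] := lerP x y.
  + move: hxy; rewrite ger0_norm ?subr_ge0 // => hxy.
    have : e (x + u) <= e y.
      by apply: emon; [rewrite addr_ge0 // ltW | rewrite /u; lra].
    have exy : e x <= e y by apply: emon.
    move: h1; rewrite ger0_norm ?subr_ge0 //; lra.
  + move: hxy; rewrite ltr0_norm ?subr_lt0 // => hxy.
    have ux : u <= x by rewrite /u; lra.
    have : e y <= e (x - u) by apply: emon => //; rewrite /u; lra.
    move: h2; rewrite /d2 ux ltr0_norm; last first.
      by rewrite subr_lt0; apply: einc.
    lra.
Qed.

Definition rt (j : nat) (t : R) := iter j (@Num.sqrt R) t.

Lemma rt_ge0 j t : 0 <= t -> 0 <= rt j t.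
Proof. by case: j => [//|j] _; rewrite /rt iterS sqrtr_ge0. Qed.

Lemma rt0 j : rt j 0 = 0.
Proof. by elim: j => [//|j IH]; rewrite /rt iterS -/(rt j 0) IH sqrtr0. Qed.

Lemma rt_pow j t : 0 <= t -> rt j t ^+ (2 ^ j) = t.
Proof.
move=> t0; elim: j => [|j IH]; first by rewrite expr1.
rewrite /rt iterS -/(rt j t) expnS exprM sqr_sqrtr ?IH //.
exact: rt_ge0.
Qed.

Lemma rt_mon j s t : 0 <= s -> s <= t -> rt j s <= rt j t.
Proof.
move=> s0 st; elim: j => [//|j IH].
by rewrite /rt !iterS -/(rt j s) -/(rt j t) ler_sqrt // rt_ge0 // (le_trans s0).
Qed.

Lemma rt_cont j : continuous (rt j).
Proof.
elim: j => [|j IH] x; first exact: cvg_id.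
exact: (continuous_comp (IH x) (@sqrt_continuous R _)).
Qed.

Definition eta (K : R) (k j : nat) (t : R) := 2 * K * rt j t + K * t ^+ k.+1 + t.

Lemma eta_homeo K k j : 0 <= K ->
  homeo_between (@rdist R) (@rdist R) [set t | 0 <= t] [set t | 0 <= t]
    (eta K k j).
Proof.
move=> K0; apply: homeo_incr.
- move=> x; rewrite /continuous_at /eta.
  apply: cvgD; last exact: cvg_id.
  apply: cvgD; apply: cvgM; (try exact: cvg_cst).
  + exact: rt_cont.
  + exact: exprn_continuous.
- rewrite /eta rt0 mulr0 add0r.
  by rewrite expr0n mulr0 addr0.
- move=> s t s0 st; rewrite /eta; apply: ler_ltD => //.
  apply: lerD.
  + apply: ler_wpM2l; first by rewrite mulr_ge0.
    by apply: rt_mon => //; apply: ltW.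
  + apply: ler_wpM2l => //.
    have t0 : 0 <= t by apply: le_trans s0 (ltW st).
    by rewrite lerXn2r ?nnegrE // ltW.
- move=> t t0; rewrite /eta lerDr addr_ge0 // mulr_ge0 ?mulr_ge0 ?rt_ge0 //.
  exact: exprn_ge0.
Qed.

Lemma find_exp (y : R) : 1 < y -> exists m : nat, 2 ^+ m < y <= 2 ^+ m.+1.
Proof.
move=> y1.
have y0 : 0 <= y by apply: le_trans (ltW y1).
have exP : exists n, (y <= 2 ^+ n.+1 :> R).
  exists (Num.truncn y); apply/ltW; apply: lt_le_trans (truncnS_gt y) _.
  rewrite -natrX ler_nat; apply/ltnW; exact: ltn_expl.
pose P := fun n : nat => (y <= 2 ^+ n.+1 :> R).
have exP' : exists n, P n by [].
case: (ex_minnP exP') => m Pm hmin.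
exists m; apply/andP; split; last exact: Pm.
case: m Pm hmin => [|m] Pm hmin; first by rewrite expr0.
rewrite ltNge; apply/negP => h.
by have := hmin m h; rewrite ltnn.
Qed.

Lemma inv_lt (u w : R) : 0 < u -> 0 < w -> w < u^-1 -> u < w^-1.
Proof.
by move=> u0 w0 h; rewrite -[u]invrK ltf_pV2 ?posrE ?invr_gt0.
Qed.

Lemma inv_le (u w : R) : 0 < u -> 0 < w -> u^-1 <= w -> w^-1 <= u.
Proof.
by move=> u0 w0 h; rewrite -[u]invrK lef_pV2 ?posrE ?invr_gt0.
Qed.

Lemma hard_dir X Y f C : homeo_between (@cdist R) (@cdist R) X Y f ->
  bounded_turning X ->
  (forall x r, X x -> 0 < r -> roundish Y C (f @` cball X x r) (f x)) ->
  quasisymmetric X f.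
Proof.
case=> fXY finj _ fc _ [L L0 bt] hr.
have fw := @wqs_of_roundish X Y f C fXY finj hr.
set H := Num.max C 1 in fw.
have H1 : 1 <= H by rewrite le_max lexx orbT.
have H0 : 0 <= H by apply: le_trans H1.
have [K K1 hK] := @ratio2 X f H L H0 finj fc fw L0 bt.
have A2 := @ratio2_iter X f K L K1 bt hK.
have [t0 t00 hs] := @small_ratio X f H L H1 finj fw bt.
set j := Num.truncn (t0^-1).
set Q := (2 ^ j)%N.
have Q0 : (0 < Q)%N by rewrite expn_gt0.
set tq : R := (2^-1) ^+ Q.
have h20 : (0 : R) < 2^-1 by rewrite invr_gt0.
have h21 : (2^-1 : R) <= 1 by rewrite invf_le1 // ler1n.
have tq0 : 0 < tq by rewrite exprn_gt0.
have tq1 : tq <= 1 by rewrite exprn_ile1 // ltW.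
have tqt0 : tq <= t0.
  rewrite /tq exprVn; apply: inv_le => //.
  apply/ltW; apply: lt_le_trans (truncnS_gt _) _.
  rewrite -natrX ler_nat; apply: leq_trans (ltn_expl j (isT : 1 < 2)%N) _.
  by apply/ltnW/ltn_expl.
have hs' : forall x a b, X x -> X a -> X b -> cdist x a <= tq * cdist x b ->
    cdist (f x) (f a) <= 2^-1 * cdist (f x) (f b).
  move=> x a b Xx Xa Xb h; apply: hs => //; apply: le_trans h _.
  by rewrite ler_wpM2r // cdist_ge0.
have B2 := @small_iter X f tq L tq0 tq1 bt hs'.
set k := Num.truncn K.
set K' : R := 2 ^+ k.+1.
have KK : K <= K'.
  apply/ltW; apply: lt_le_trans (truncnS_gt _) _.
  by rewrite /K' -natrX ler_nat; apply/ltnW/ltn_expl.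
have K'1 : 1 <= K' by apply: le_trans KK.
have K'0 : 0 <= K' by apply: le_trans K'1.
exists (eta K' k j); split; first exact: eta_homeo.
move=> t tp a b x Xa Xb Xx hab.
have sg0 := cdist_ge0 (f x) (f b).
have rh0 := cdist_ge0 x b.
set sig := cdist (f x) (f b) in sg0 *.
have t0' : 0 <= t by apply: ltW.
have u0 : 0 <= rt j t by apply: rt_ge0.
have et1 : 2 * K' * rt j t <= eta K' k j t.
  rewrite /eta -addrA lerDl; apply: addr_ge0 => //; apply: mulr_ge0 => //.
  exact: exprn_ge0.
have et2 : K' * t ^+ k.+1 <= eta K' k j t.
  rewrite /eta -addrA [K' * _ + _]addrC addrA lerDr.
  by apply: addr_ge0 => //; apply: mulr_ge0 => //; apply: mulr_ge0.
case: (lerP t 1) => ht.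
- set u := rt j t in u0 et1.
  have upow : u ^+ Q = t by apply: rt_pow.
  have up : 0 < u.
    rewrite lt_neqAle u0 andbT; apply/eqP => u0'.
    by move: upow; rewrite -u0' expr0n eqn0Ngt Q0 /= => e; move: tp; rewrite -e ltxx.
  case: (lerP (2^-1) u) => hu.
  + have : cdist x a <= 2 ^+ 1 * cdist x b.
      apply: le_trans hab _; rewrite expr1 ler_wpM2r //; apply: le_trans ht _.
      by rewrite ler1n.
    move/(A2 0%N x a b Xx Xa Xb); rewrite expr1 => h.
    apply: le_trans h _; apply: ler_wpM2r => //.
    apply: le_trans KK _; apply: le_trans et1.
    rewrite -mulrA mulrC -mulrA ler_peMr //.
    by rewrite -ler_pdivrMr // mul1r.
  + have [m /andP[m1 m2]] : exists m : nat, 2 ^+ m < u^-1 <= 2 ^+ m.+1.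
      apply: find_exp; rewrite -[1]invr1 ltf_pV2 ?posrE //.
      by apply: lt_le_trans hu _; rewrite invf_le1 // ler1n.
    case: m m1 m2 => [|m] m1 m2.
      have : 2^-1 <= u by apply: inv_le; rewrite ?expr1 in m2.
      by rewrite leNgt hu.
    have l1 : u < (2^-1) ^+ m.+1.
      by rewrite exprVn; apply: inv_lt => //; rewrite exprn_gt0.
    have l2 : (2^-1) ^+ m.+2 <= u.
      by rewrite exprVn; apply: inv_le => //; rewrite exprn_gt0.
    have : cdist x a <= tq ^+ m.+1 * cdist x b.
      apply: le_trans hab _; rewrite ler_wpM2r // /tq exprAC -upow.
      by rewrite lerXn2r ?nnegrE ?exprn_ge0 // ltW.
    move/(B2 m x a b Xx Xa Xb) => h.
    apply: le_trans h _; apply: ler_wpM2r => //.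
    apply: le_trans et1.
    have : (2^-1) ^+ m.+1 = 2 * (2^-1) ^+ m.+2 :> R.
      by rewrite [X in _ = _ * X]exprS mulrA divff ?mul1r // pnatr_eq0.
    move=> ->; rewrite -mulrA ler_wpM2l //.
    apply: le_trans l2 _; rewrite ler_peMl //.
- have [m /andP[m1 m2]] := @find_exp t ht.
  have : cdist x a <= 2 ^+ m.+1 * cdist x b.
    by apply: le_trans hab _; rewrite ler_wpM2r.
  move/(A2 m x a b Xx Xa Xb) => h.
  apply: le_trans h _; apply: ler_wpM2r => //.
  apply: le_trans et2.
  apply: (@le_trans _ _ (K' ^+ m.+1)).
    by rewrite lerXn2r ?nnegrE // (le_trans ler01 K1).
  rewrite exprS ler_wpM2l // /K' -exprM mulnC exprM.
  by rewrite lerXn2r ?nnegrE ?exprn_ge0 // ltW.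
Qed.

Lemma easy_dir X Y f : homeo_between (@cdist R) (@cdist R) X Y f ->
  quasisymmetric X f ->
  exists C : R, forall x r, X x -> 0 < r ->
    roundish Y C (f @` cball X x r) (f x).
Proof.
case=> fXY finj fsurj _ _ [e [[e0 _ _ _ _] qs]].
have e1 : 0 <= e 1 by apply: e0; rewrite /= ler01.
exists (2 * e 1 + 1) => x r Xx r0.
set C := 2 * e 1 + 1.
have C0 : 0 < C by rewrite /C; lra.
set S := f @` cball X x r.
have key : forall w, (Y `\` S) w -> (diam S <= (C * cdist (f x) w)%:E)%E.
  move=> w [Yw nSw]; have [a' Xa' faw] := fsurj w Yw; subst w.
  have far : r < cdist a' x.
    by rewrite ltNge; apply/negP => h; apply: nSw; exists a'.
  apply: ge_ereal_sup => _ [p [q [[y1 [Xy1 h1] <-] [y2 [Xy2 h2] <-] ->]]].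
  rewrite lee_fin.
  have b1 : cdist (f x) (f y1) <= e 1 * cdist (f x) (f a').
    apply: qs => //; rewrite ?ltr01 // mul1r cdistC [cdist x a']cdistC.
    exact/ltW/(le_lt_trans h1).
  have b2 : cdist (f x) (f y2) <= e 1 * cdist (f x) (f a').
    apply: qs => //; rewrite ?ltr01 // mul1r cdistC [cdist x a']cdistC.
    exact/ltW/(le_lt_trans h2).
  have := cdist_tri (f y1) (f x) (f y2); rewrite (cdistC (f y1) (f x)).
  have d0 := cdist_ge0 (f x) (f a').
  have -> : C * cdist (f x) (f a') =
      2 * (e 1 * cdist (f x) (f a')) + cdist (f x) (f a') by rewrite /C; ring.
  lra.
rewrite /roundish.
have hinf : ((C^-1)%:E * diam S <= inr Y S (f x))%E.
  apply: le_ereal_inf_tmp => _ [w Hw ->].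
  have := key w Hw => /(@lee_wpmul2l R (C^-1)%:E).
  rewrite lee_fin invr_ge0 (ltW C0) => /(_ isT).
  by rewrite -EFinM mulrA mulVf ?gt_eqF // mul1r.
have := @lee_wpmul2l R C%:E; rewrite lee_fin (ltW C0) => /(_ isT _ _ hinf).
by rewrite muleA -EFinM divff ?gt_eqF // mul1e.
Qed.
End Basic.

Theorem lemma3p2 (R : realType) (X Y : set R[i]) (f : R[i] -> R[i]) :
  homeo_between (@cdist R) (@cdist R) X Y f ->
  bounded_turning X ->
  (quasisymmetric X f <->
   exists C : R, forall (x : R[i]) (r : R), X x -> 0 < r ->
     roundish Y C (f @` cball X x r) (f x)).
Proof.
move=> hf bt; split.
- exact: easy_dir.
- by case=> C hC; apply: (@hard_dir R X Y f C hf bt hC).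
Qed.
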